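(* Let $-\infty\le a<\infty$ and let $s$ be a positive, twice differentiable function on $(a,\infty)$ such that $b=-\log s$ is convex. Suppose the Laplace transform $L(\lambda)=e^{k(\lambda)}=\int_a^\infty e^{-\lambda x}s(x)\,dx$ is finite on a nonempty open interval $\Lambda$. Let $\lambda_1<\lambda_2$ be in $\Lambda$, $p\in(0,1)$, and set $$p_1=pe^{-k(\lambda_1)},\quad p_2=(1-p)e^{-k(\lambda_2)},\quad c=\frac{\lambda_2-\lambda_1}{2},\quad d=\log\sqrt{p_1/p_2}.$$ Assume that for all $x>a$ we have $b''(x)>0$ and $$\frac{c}{\sqrt{b''(x)}}\le\cosh(cx+d).$$ Then the probability density on $(a,\infty)$ $$f(x)=\left(pe^{-\lambda_1x-k(\lambda_1)}+(1-p)e^{-\lambda_2x-k(\lambda_2)}\right)s(x)$$ has a nondecreasing hazard rate $x\mapsto f(x)/\int_x^\infty f(t)\,dt$ on $(a,\infty)$.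
   Context: The hazard rate of a probability density $f$ on $(a,\infty)$ is $h(x)=f(x)/\int_x^\infty f(t)\,dt$. *)

(* Defs.v *)
From Stdlib Require Import Reals Lra.
Open Scope R_scope.

Inductive lbound : Type := NegInf | Fin (a : R).

Definition above (a : lbound) (x : R) : Prop :=
  match a with NegInf => True | Fin a0 => a0 < x end.

Definition improper_int (a : lbound) (g : R -> R) (l : R) : Prop :=
  (forall u v, above a u -> u <= v -> inhabited (Riemann_integrable g u v)) /\
  (forall eps, 0 < eps -> exists u0 v0, above a u0 /\
     forall u v (pr : Riemann_integrable g u v),
       above a u -> u <= u0 -> v0 <= v -> Rabs (RiemannInt pr - l) < eps).

Definition convex_on (a : lbound) (g : R -> R) : Prop :=
  forall x y t, above a x -> above a y -> 0 <= t <= 1 ->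
    g (t * x + (1 - t) * y) <= t * g x + (1 - t) * g y.

Definition nonempty_open_interval (L : R -> Prop) : Prop :=
  (exists x, L x) /\
  (forall x y z, L x -> L y -> x <= z <= y -> L z) /\
  (forall x, L x -> exists eps, 0 < eps /\ forall y, Rabs (y - x) < eps -> L y).

(* Main.v *)
Require Import Defs.
From Stdlib Require Import Reals Lra FunctionalExtensionality Classical_Prop.
Open Scope R_scope.

Lemma dpl_ext (f g : R -> R) x l l' :
  (forall y, f y = g y) -> l = l' -> derivable_pt_lim f x l -> derivable_pt_lim g x l'.
Proof.
  intros H <- D. replace g with f; [exact D|]. apply functional_extensionality; auto.
Qed.

Lemma mono_up (F F' : R -> R) x y : x <= y ->
  (forall c, x <= c <= y -> derivable_pt_lim F c (F' c)) ->
  (forall c, x <= c <= y -> 0 <= F' c) -> F x <= F y.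
Proof.
  intros Hxy HD HP. destruct (Rle_lt_or_eq_dec _ _ Hxy) as [Hlt|<-]; [|lra].
  destruct (MVT_cor2 F F' x y Hlt HD) as [c [Hc Hc2]].
  assert (0 <= F' c) by (apply HP; lra).
  assert (0 <= F' c * (y - x)) by (apply Rmult_le_pos; lra). lra.
Qed.

Lemma mono_down (F F' : R -> R) x y : x <= y ->
  (forall c, x <= c <= y -> derivable_pt_lim F c (F' c)) ->
  (forall c, x <= c <= y -> F' c <= 0) -> F y <= F x.
Proof.
  intros Hxy HD HP.
  assert (- F x <= - F y); [|lra].
  apply (mono_up (fun t => - F t) (fun t => - F' t)); auto.
  - intros c Hc. apply (dpl_ext (- F)%F _ c (- F' c)); [reflexivity|reflexivity|].
    apply derivable_pt_lim_opp; auto.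
  - intros c Hc; specialize (HP c Hc); lra.
Qed.

Lemma Rmax_cont x0 t : continuity_pt (Rmax x0) t.
Proof.
  unfold continuity_pt, continue_in, limit1_in, limit_in. intros eps Heps.
  exists eps. split; auto. intros z [_ Hz]. simpl in *. unfold Rdist in *.
  unfold Rmax; destruct (Rle_dec x0 z), (Rle_dec x0 t); split_Rabs; lra.
Qed.

Lemma above_mono a x t : above a x -> x <= t -> above a t.
Proof. destruct a; simpl; lra. Qed.

Lemma clamp_cont a (h : R -> R) x0 :
  (forall t, above a t -> continuity_pt h t) -> above a x0 ->
  forall t, continuity_pt (fun t => h (Rmax x0 t)) t.
Proof.
  intros Hc Hx t. apply (continuity_pt_comp (Rmax x0) h). apply Rmax_cont.
  apply Hc. apply (above_mono a x0); auto. apply Rmax_l.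
Qed.

Definition gint (G : R -> R) (HG : forall t, continuity_pt G t) (u v : R) :
  Riemann_integrable G u v :=
  match Rle_dec u v with
  | left H => @continuity_implies_RiemannInt G u v H (fun t _ => HG t)
  | right H => RiemannInt_P1 (@continuity_implies_RiemannInt G v u
                  (Rlt_le _ _ (Rnot_le_lt _ _ H)) (fun t _ => HG t))
  end.

Definition Prim G HG x0 v := RiemannInt (gint G HG x0 v).

Lemma Prim_chasles G HG x0 u v (pr : Riemann_integrable G u v) :
  RiemannInt pr = Prim G HG x0 v - Prim G HG x0 u.
Proof.
  unfold Prim. pose proof (RiemannInt_P26 (gint G HG x0 u) pr (gint G HG x0 v)). lra.
Qed.

Lemma Prim_deriv G HG x0 v : derivable_pt_lim (Prim G HG x0) v (G v).
Proof.
  assert (h : v - 1 <= v + 1) by lra.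
  pose (C0 := fun t (_ : v - 1 <= t <= v + 1) => HG t).
  pose proof (@RiemannInt_P28 G (v-1) (v+1) v h C0 ltac:(lra)) as D.
  pose proof (derivable_pt_lim_plus (fct_cte (Prim G HG x0 (v-1))) (primitive h (FTC_P1 h C0)) v _ _
               (derivable_pt_lim_const _ v) D) as D2.
  replace (G v) with (0 + G v) by ring.
  apply (derivable_pt_lim_locally_ext _ (Prim G HG x0) v (v-1) (v+1) _ ltac:(lra)) in D2; [exact D2|].
  - intros z Hz. unfold plus_fct, fct_cte, primitive.
    destruct (Rle_dec (v-1) z); [|lra]. destruct (Rle_dec z (v+1)); [|lra].
    rewrite (Prim_chasles G HG x0 (v-1) z). ring.
Qed.

Lemma Prim_cont G HG x0 v : continuity_pt (Prim G HG x0) v.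
Proof.
  apply derivable_continuous_pt. exists (G v). apply Prim_deriv.
Qed.

Lemma Prim_int_h a h x0 (Hc : forall t, above a t -> continuity_pt h t) (Hx : above a x0)
  u v (pr : Riemann_integrable h u v) : x0 <= u -> u <= v ->
  RiemannInt pr = Prim _ (clamp_cont a h x0 Hc Hx) x0 v - Prim _ (clamp_cont a h x0 Hc Hx) x0 u.
Proof.
  intros H1 H2. rewrite <- Prim_chasles with (pr := gint _ (clamp_cont a h x0 Hc Hx) u v).
  apply RiemannInt_P18; auto. intros t Ht. rewrite Rmax_right; lra.
Qed.

Lemma cont_eps f x : continuity_pt f x -> forall eps, 0 < eps ->
  exists del, 0 < del /\ forall z, Rabs (z - x) < del -> Rabs (f z - f x) < eps.
Proof.
  intros Hc eps He. destruct (Hc eps He) as [del [Hd H]]. exists del; split; auto.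
  intros z Hz. destruct (Req_dec z x) as [->|Hn].
  - rewrite Rminus_diag, Rabs_R0; auto.
  - apply (H z). split. split. constructor. intro E; apply Hn; symmetry; auto.
    simpl; unfold Rdist; auto.
Qed.

Lemma Prim_mono a h x Hc Hx (Hpos : forall t, above a t -> 0 <= h t) u v :
  x <= u -> u <= v ->
  Prim _ (clamp_cont a h x Hc Hx) x u <= Prim _ (clamp_cont a h x Hc Hx) x v.
Proof.
  intros H1 H2. apply (mono_up _ (fun t => h (Rmax x t))); auto.
  - intros c _; exact (Prim_deriv _ _ x c).
  - intros c Hc'. apply Hpos. apply (above_mono a x); auto. apply Rmax_l.
Qed.

Lemma lim_T a h x0 x (Hc : forall t, above a t -> continuity_pt h t) (Hx0 : above a x0) T : x0 <= x -> improper_int (Fin x) h T ->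
  forall eps, 0 < eps -> exists V0, forall V, V0 <= V ->
   Rabs (Prim _ (clamp_cont a h x0 Hc Hx0) x0 V - Prim _ (clamp_cont a h x0 Hc Hx0) x0 x - T) < eps.
Proof.
  intros Hx0x [_ HI] eps He.
  destruct (HI (eps/2) ltac:(lra)) as [u0 [v0 [Hu0 H]]]. simpl in Hu0.
  destruct (cont_eps _ _ (Prim_cont _ (clamp_cont a h x0 Hc Hx0) x0 x) (eps/2) ltac:(lra))
    as [del [Hd Hdel]].
  set (u := Rmin u0 (x + del/2)).
  assert (Hu : x < u /\ u <= u0 /\ u <= x + del/2).
  { unfold u, Rmin; destruct (Rle_dec u0 (x+del/2)); lra. }
  exists (Rmax v0 u0). intros V HV.
  assert (HV1 : v0 <= V /\ u0 <= V).
  { unfold Rmax in HV; destruct (Rle_dec v0 u0); lra. }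
  assert (Hc2 : forall t, u <= t <= V -> continuity_pt h t).
  { intros t Ht; apply Hc; apply (above_mono a x0); auto; lra. }
  pose (pr := @continuity_implies_RiemannInt h u V ltac:(lra) Hc2).
  specialize (H u V pr ltac:(simpl; lra) ltac:(lra) ltac:(lra)).
  rewrite (Prim_int_h a h x0 Hc Hx0 u V pr) in H by lra.
  specialize (Hdel u ltac:(rewrite Rabs_pos_eq; lra)).
  revert H Hdel. split_Rabs; lra.
Qed.

Lemma T_pos a h x0 x (Hc : forall t, above a t -> continuity_pt h t) (Hx0 : above a x0) T (Hpos : forall t, above a t -> 0 < h t) :
  x0 <= x -> improper_int (Fin x) h T -> 0 < T.
Proof.
  intros Hx HT. set (P := Prim _ (clamp_cont a h x0 Hc Hx0) x0).
  destruct (MVT_cor2 P (fun t => h (Rmax x0 t)) x (x+1) ltac:(lra)) as [c [Hc1 Hc2]].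
  { intros c _; exact (Prim_deriv _ _ x0 c). }
  assert (0 < h (Rmax x0 c)) by (apply Hpos; apply (above_mono a x0); auto; apply Rmax_l).
  set (mm := P (x+1) - P x).
  assert (Hm : 0 < mm) by (unfold mm; rewrite Hc1; nra).
  destruct (lim_T a h x0 x Hc Hx0 T Hx HT (mm/2) ltac:(lra)) as [V0 HV0].
  set (V := Rmax V0 (x+1)).
  assert (HV : V0 <= V /\ x + 1 <= V) by (unfold V, Rmax; destruct (Rle_dec V0 (x+1)); lra).
  specialize (HV0 V ltac:(lra)). fold P in HV0.
  assert (P (x+1) <= P V).
  { apply (Prim_mono a h x0 Hc Hx0); [intros; apply Rlt_le; auto|lra|lra]. }
  revert HV0. unfold mm in *. split_Rabs; lra.
Qed.

Lemma tail_exists a h x Hc Hx (Hpos : forall t, above a t -> 0 <= h t) B :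
  (forall V, x <= V -> Prim _ (clamp_cont a h x Hc Hx) x V - Prim _ (clamp_cont a h x Hc Hx) x x <= B) ->
  exists l, improper_int (Fin x) h l.
Proof.
  intros HB. set (P := Prim _ (clamp_cont a h x Hc Hx) x).
  set (E := fun r => exists V, x <= V /\ r = P V).
  destruct (completeness E) as [m [Hub Hlub]].
  { exists (B + P x). intros r [V [HV ->]]. specialize (HB V HV). unfold P in *. lra. }
  { exists (P x). exists x. split; auto; lra. }
  exists (m - P x). split.
  - intros u v Hu Huv. constructor. apply continuity_implies_RiemannInt; auto.
    intros t Ht; apply Hc; apply (above_mono a x); simpl in Hu; auto; lra.
  - intros eps He.
    assert (HV1 : exists V1, x <= V1 /\ m - eps/2 < P V1).
    { destruct (Classical_Prop.classic (exists V1, x <= V1 /\ m - eps/2 < P V1)) as [H|H]; auto.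
      exfalso. assert (m <= m - eps/2); [|lra]. apply Hlub. intros r [V [HV ->]].
      destruct (Rle_lt_dec (P V) (m - eps/2)); auto. exfalso; apply H; exists V; auto. }
    destruct HV1 as [V1 [HV1 HV1']].
    destruct (cont_eps _ _ (Prim_cont _ (clamp_cont a h x Hc Hx) x x) (eps/2) ltac:(lra))
      as [del [Hd Hdel]].
    exists (x + del/2), (Rmax V1 (x + del/2)). split; [simpl; lra|].
    intros u v pr Hu Hu0 Hv. simpl in Hu.
    assert (Hv1 : V1 <= v /\ x + del/2 <= v).
    { unfold Rmax in Hv; destruct (Rle_dec V1 (x+del/2)); lra. }
    rewrite (Prim_int_h a h x Hc Hx u v pr) by lra. fold P.
    assert (P V1 <= P v) by (apply Prim_mono; auto; lra).
    assert (P v <= m) by (apply Hub; exists v; split; auto; lra).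
    specialize (Hdel u ltac:(rewrite Rabs_pos_eq; lra)). fold P in Hdel.
    revert Hdel. split_Rabs; lra.
Qed.

Lemma dlin l e t : derivable_pt_lim (fun y => l * y - e) t l.
Proof.
  apply (dpl_ext (mult_real_fct l id - fct_cte e)%F _ t (l * 1 - 0)); [reflexivity|ring|].
  apply derivable_pt_lim_minus. apply derivable_pt_lim_scal, derivable_pt_lim_id.
  apply derivable_pt_lim_const.
Qed.

Lemma dexpl c l e t : derivable_pt_lim (fun y => c * exp (l * y - e)) t (l * (c * exp (l * t - e))).
Proof.
  apply (dpl_ext (mult_real_fct c (comp exp (fun y => l*y - e))) _ t (c * (exp (l*t - e) * l)));
    [reflexivity|ring|].
  apply derivable_pt_lim_scal. apply derivable_pt_lim_comp. apply dlin. apply derivable_pt_lim_exp.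
Qed.

Lemma dshift (F : R -> R) d t l : derivable_pt_lim F (t + d) l ->
  derivable_pt_lim (fun z => F (z + d)) t l.
Proof.
  intro H. apply (dpl_ext (comp F (fun z => z + d)) _ t (l * 1)); [reflexivity|ring|].
  apply derivable_pt_lim_comp; auto.
  apply (dpl_ext (id + fct_cte d)%F _ t (1 + 0)); [reflexivity|ring|].
  apply derivable_pt_lim_plus. apply derivable_pt_lim_id. apply derivable_pt_lim_const.
Qed.

Lemma logconc a (s b1 b2 k : R -> R) lam1 lam2 p
  (Hspos : forall x, above a x -> 0 < s x)
  (Hb1 : forall x, above a x -> derivable_pt_lim (fun y => - ln (s y)) x (b1 x))
  (Hb2 : forall x, above a x -> derivable_pt_lim b1 x (b2 x))
  (Hl12 : lam1 < lam2)
  (Hp : 0 < p < 1)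
  (Hcond : forall x, above a x ->
     0 < b2 x /\
     let p1 := p * exp (- k lam1) in
     let p2 := (1 - p) * exp (- k lam2) in
     let c := (lam2 - lam1) / 2 in
     let d := ln (sqrt (p1 / p2)) in
     c / sqrt (b2 x) <= cosh (c * x + d)) :
  let F := fun x => (p * exp (- lam1 * x - k lam1)
                     + (1 - p) * exp (- lam2 * x - k lam2)) * s x in
  forall x y z, above a x -> x <= y -> x <= z -> F x * F (z + (y - x)) <= F y * F z.
Proof.
  intros F.
  set (A := fun t => p * exp (- lam1 * t - k lam1)).
  set (B := fun t => (1 - p) * exp (- lam2 * t - k lam2)).
  set (q := fun t => A t + B t).
  set (Q1 := fun t => - lam1 * A t + - lam2 * B t).
  set (Q2 := fun t => lam1 * lam1 * A t + lam2 * lam2 * B t).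
  assert (HA : forall t, 0 < A t).
  { intro t; unfold A; apply Rmult_lt_0_compat; [lra|apply exp_pos]. }
  assert (HB : forall t, 0 < B t).
  { intro t; unfold B; apply Rmult_lt_0_compat; [lra|apply exp_pos]. }
  assert (Hq : forall t, 0 < q t) by (intro t; unfold q; specialize (HA t); specialize (HB t); lra).
  assert (dq : forall t, derivable_pt_lim q t (Q1 t)).
  { intro t. apply (dpl_ext (A + B)%F _ t (- lam1 * A t + - lam2 * B t)); [reflexivity|reflexivity|].
    apply derivable_pt_lim_plus; [apply dexpl|apply dexpl]. }
  assert (dQ1 : forall t, derivable_pt_lim Q1 t (Q2 t)).
  { intro t. unfold Q1, Q2, A, B.
    set (E1 := fun y => (- lam1 * p) * exp (- lam1 * y - k lam1)).
    set (E2 := fun y => (- lam2 * (1 - p)) * exp (- lam2 * y - k lam2)).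
    apply (dpl_ext (E1 + E2)%F _ t
             (- lam1 * (- lam1 * p * exp (- lam1 * t - k lam1)) +
              - lam2 * (- lam2 * (1 - p) * exp (- lam2 * t - k lam2))));
      [intro; unfold plus_fct, E1, E2; ring|ring|].
    apply derivable_pt_lim_plus; apply dexpl. }
  set (ell := fun t => ln (q t) + ln (s t)).
  set (m := fun t => Q1 t / q t - b1 t).
  assert (dell : forall t, above a t -> derivable_pt_lim ell t (m t)).
  { intros t Ht. unfold m.
    set (bb := fun y => - ln (s y)).
    apply (dpl_ext (comp ln q + (- bb))%F _ t (/ q t * Q1 t + - b1 t)).
    { intro y; unfold plus_fct, opp_fct, comp, ell, bb; ring. }
    { unfold Rdiv; ring. }
    apply derivable_pt_lim_plus.
    - apply derivable_pt_lim_comp; auto. apply derivable_pt_lim_ln; auto.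
    - apply derivable_pt_lim_opp; auto. }
  assert (dm : forall t, above a t -> derivable_pt_lim m t
             ((Q2 t * q t - Q1 t * Q1 t) / Rsqr (q t) - b2 t)).
  { intros t Ht. apply (dpl_ext (Q1 / q - b1)%F _ t ((Q2 t * q t - Q1 t * Q1 t) / Rsqr (q t) - b2 t)); [reflexivity|reflexivity|].
    apply derivable_pt_lim_minus; auto. apply derivable_pt_lim_div; auto.
    specialize (Hq t); lra. }
  assert (dmneg : forall t, above a t -> (Q2 t * q t - Q1 t * Q1 t) / Rsqr (q t) - b2 t <= 0).
  { intros t Ht. destruct (Hcond t Ht) as [Hb2p Hc]. cbv zeta in Hc.
    set (p1 := p * exp (- k lam1)) in Hc. set (p2 := (1 - p) * exp (- k lam2)) in Hc.
    set (c := (lam2 - lam1) / 2) in Hc. set (d := ln (sqrt (p1 / p2))) in Hc.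
    assert (Hp1 : 0 < p1) by (unfold p1; apply Rmult_lt_0_compat; [lra|apply exp_pos]).
    assert (Hp2 : 0 < p2) by (unfold p2; apply Rmult_lt_0_compat; [lra|apply exp_pos]).
    set (E := exp (c * t + d)).
    assert (HE : 0 < E) by apply exp_pos.
    assert (HE2 : E * E = exp (c * t) * exp (c * t) * (p1 / p2)).
    { unfold E, d. rewrite exp_plus, exp_ln.
      - replace (exp (c * t) * sqrt (p1 / p2) * (exp (c * t) * sqrt (p1 / p2))) with
          (exp (c * t) * exp (c * t) * (sqrt (p1 / p2) * sqrt (p1 / p2))) by ring.
        rewrite sqrt_sqrt; auto. apply Rlt_le, Rdiv_lt_0_compat; auto.
      - apply sqrt_lt_R0, Rdiv_lt_0_compat; auto. }
    assert (HAB : A t = B t * (E * E)).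
    { rewrite HE2. unfold A, B, p1, p2.
      assert (Hx : exp (- lam2 * t - k lam2) * exp (c * t) * exp (c * t) * exp (- k lam1)
                   = exp (- lam1 * t - k lam1) * exp (- k lam2)).
      { rewrite <- !exp_plus. f_equal. unfold c. field. }
      assert (0 < exp (- k lam2)) by apply exp_pos.
      replace ((1 - p) * exp (- lam2 * t - k lam2) * (exp (c * t) * exp (c * t) *
         (p * exp (- k lam1) / ((1 - p) * exp (- k lam2))))) with
        (p * (exp (- lam2 * t - k lam2) * exp (c * t) * exp (c * t) * exp (- k lam1)) / exp (- k lam2))
        by (field; lra).
      rewrite Hx. field; lra. }
    assert (Hcosh : cosh (c * t + d) = (E + / E) / 2).
    { unfold cosh, E. rewrite exp_Ropp. reflexivity. }
    assert (Hqq : q t * q t = 4 * A t * B t * (cosh (c * t + d) * cosh (c * t + d))).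
    { rewrite Hcosh. unfold q. rewrite HAB. field. lra. }
    assert (Hcpos : 0 < c) by (unfold c; lra).
    assert (Hsq : 0 < sqrt (b2 t)) by (apply sqrt_lt_R0; auto).
    assert (Hc1 : c <= sqrt (b2 t) * cosh (c * t + d)).
    { unfold Rdiv in Hc. apply (Rmult_le_compat_l (sqrt (b2 t))) in Hc; [|lra].
      rewrite <- Rmult_assoc, Rmult_comm, <- Rmult_assoc, Rinv_l in Hc; lra. }
    assert (Hc2 : c * c <= b2 t * (cosh (c * t + d) * cosh (c * t + d))).
    { replace (b2 t) with (sqrt (b2 t) * sqrt (b2 t)) by (apply sqrt_sqrt; lra).
      replace (sqrt (b2 t) * sqrt (b2 t) * (cosh (c * t + d) * cosh (c * t + d))) with
        ((sqrt (b2 t) * cosh (c * t + d)) * (sqrt (b2 t) * cosh (c * t + d))) by ring.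
      apply Rmult_le_compat; lra. }
    assert (Hid : Q2 t * q t - Q1 t * Q1 t = 4 * (c * c) * (A t * B t)).
    { unfold Q1, Q2, q, c. field. }
    assert (HABp : 0 < A t * B t) by (apply Rmult_lt_0_compat; auto).
    assert (Hkey : Q2 t * q t - Q1 t * Q1 t <= b2 t * Rsqr (q t)).
    { unfold Rsqr. rewrite Hid, Hqq.
      replace (b2 t * (4 * A t * B t * (cosh (c * t + d) * cosh (c * t + d)))) with
        (4 * (b2 t * (cosh (c * t + d) * cosh (c * t + d))) * (A t * B t)) by ring.
      apply Rmult_le_compat_r; lra. }
    assert (Hq2 : 0 < Rsqr (q t)) by (unfold Rsqr; specialize (Hq t); nra).
    apply (Rmult_le_compat_r (/ Rsqr (q t))) in Hkey; [|apply Rlt_le, Rinv_0_lt_compat; auto].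
    rewrite Rmult_assoc, Rinv_r in Hkey; [|lra]. unfold Rdiv. lra. }
  intros x y z Hx Hxy Hxz.
  set (del := y - x).
  assert (Hmono : forall t1 t2, above a t1 -> t1 <= t2 -> m t2 <= m t1).
  { intros t1 t2 Ht1 Ht12. apply (mono_down m (fun t => (Q2 t * q t - Q1 t * Q1 t) / Rsqr (q t) - b2 t));
      auto; intros c Hc; [apply dm|apply dmneg]; apply (above_mono a t1); tauto. }
  assert (HD : ell (z + del) - ell z <= ell (x + del) - ell x).
  { apply (mono_down (fun w => ell (w + del) - ell w) (fun w => m (w + del) - m w)); auto.
    - intros c Hc. set (es := fun w => ell (w + del)).
      apply (dpl_ext (es - ell)%F _ c (m (c + del) - m c)); [reflexivity|reflexivity|].
      apply derivable_pt_lim_minus. apply dshift, dell. apply (above_mono a x); [exact Hx|unfold del; lra].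
      apply dell; apply (above_mono a x); [exact Hx|lra].
    - intros c Hc. assert (m (c + del) <= m c); [|lra]. apply Hmono.
      apply (above_mono a x); [exact Hx|lra]. unfold del; lra. }
  assert (HF : forall t, above a t -> F t = exp (ell t)).
  { intros t Ht. unfold ell, F. rewrite exp_plus, !exp_ln; auto. }
  replace (x + del) with y in HD by (unfold del; ring).
  rewrite !HF; try (apply (above_mono a x); [exact Hx|unfold del; lra]).
  rewrite <- !exp_plus. destruct (Rle_lt_or_eq_dec _ _ (ltac:(lra) : ell x + ell (z + del) <= ell y + ell z)) as [Hl|He]; [apply Rlt_le, exp_increasing; exact Hl|rewrite He; lra].
Qed.

Lemma bound_Hk a h L x (Hc : forall t, above a t -> continuity_pt h t) (Hx : above a x)
  (Hpos : forall t, above a t -> 0 <= h t) : improper_int a h L ->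
  forall V, x <= V -> Prim _ (clamp_cont a h x Hc Hx) x V - Prim _ (clamp_cont a h x Hc Hx) x x <= L + 1.
Proof.
  intros [_ HI] V HV. destruct (HI 1 ltac:(lra)) as [u0 [v0 [Hu0 H]]].
  set (u := Rmin u0 x). set (v := Rmax v0 V).
  assert (Hu : above a u) by (unfold u, Rmin; destruct (Rle_dec u0 x); auto).
  assert (Hux : u <= x /\ u <= u0) by (unfold u, Rmin; destruct (Rle_dec u0 x); lra).
  assert (Hv : V <= v /\ v0 <= v) by (unfold v, Rmax; destruct (Rle_dec v0 V); lra).
  assert (Hcu : forall t, u <= t -> continuity_pt h t) by (intros; apply Hc, (above_mono a u); auto).
  pose (pr := @continuity_implies_RiemannInt h u v ltac:(lra) (fun t Ht => Hcu t (proj1 Ht))).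
  pose (pr1 := @continuity_implies_RiemannInt h u x ltac:(lra) (fun t Ht => Hcu t (proj1 Ht))).
  pose (pr2 := @continuity_implies_RiemannInt h x v ltac:(lra) (fun t Ht => Hcu t ltac:(lra))).
  specialize (H u v pr Hu ltac:(lra) ltac:(lra)).
  rewrite <- (RiemannInt_P26 pr1 pr2 pr) in H.
  assert (H1 : 0 <= RiemannInt pr1).
  { pose proof (RiemannInt_P15 (RiemannInt_P14 u x 0)).
    pose proof (RiemannInt_P19 (RiemannInt_P14 u x 0) pr1 ltac:(lra)
      (fun t Ht => ltac:(unfold fct_cte; apply Hpos, (above_mono a u); auto; lra))). lra. }
  rewrite (Prim_int_h a h x Hc Hx x v pr2) in H by lra.
  assert (Prim _ (clamp_cont a h x Hc Hx) x V <= Prim _ (clamp_cont a h x Hc Hx) x v)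
    by (apply Prim_mono; auto; lra).
  revert H; split_Rabs; lra.
Qed.

Theorem proposition2
  (a : lbound) (s s1 s2 b1 b2 : R -> R) (k : R -> R) (Lambda : R -> Prop)
  (lam1 lam2 p : R)
  (* s positive and twice differentiable on (a,oo) *)
  (Hspos : forall x, above a x -> 0 < s x)
  (Hs1 : forall x, above a x -> derivable_pt_lim s x (s1 x))
  (Hs2 : forall x, above a x -> derivable_pt_lim s1 x (s2 x))
  (* b = -log s is convex; b1 = b', b2 = b'' on (a,oo) *)
  (Hbconv : convex_on a (fun x => - ln (s x)))
  (Hb1 : forall x, above a x -> derivable_pt_lim (fun y => - ln (s y)) x (b1 x))
  (Hb2 : forall x, above a x -> derivable_pt_lim b1 x (b2 x))
  (* Laplace transform L = e^k finite on the nonempty open interval Lambda *)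
  (HLam : nonempty_open_interval Lambda)
  (Hk : forall lam, Lambda lam ->
          improper_int a (fun x => exp (- lam * x) * s x) (exp (k lam)))
  (Hl1 : Lambda lam1) (Hl2 : Lambda lam2) (Hl12 : lam1 < lam2)
  (Hp : 0 < p < 1)
  (Hcond : forall x, above a x ->
     0 < b2 x /\
     let p1 := p * exp (- k lam1) in
     let p2 := (1 - p) * exp (- k lam2) in
     let c := (lam2 - lam1) / 2 in
     let d := ln (sqrt (p1 / p2)) in
     c / sqrt (b2 x) <= cosh (c * x + d)) :
  let f := fun x => (p * exp (- lam1 * x - k lam1)
                     + (1 - p) * exp (- lam2 * x - k lam2)) * s x in
  (forall x, above a x -> exists l, improper_int (Fin x) f l) /\
  (forall T : R -> R,
     (forall x, above a x -> improper_int (Fin x) f (T x)) ->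
     forall x y, above a x -> x <= y -> f x / T x <= f y / T y).
Proof.
  intros f.
  pose proof (logconc a s b1 b2 k lam1 lam2 p Hspos Hb1 Hb2 Hl12 Hp Hcond) as LC.
  fold f in LC.
  assert (Hsc : forall t, above a t -> continuity_pt s t).
  { intros t Ht. apply derivable_continuous_pt. exists (s1 t). apply Hs1; auto. }
  assert (Hec : forall lam t, continuity_pt (fun y => exp (- lam * y)) t).
  { intros lam t. apply derivable_continuous_pt. exists (- lam * (1 * exp (- lam * t - 0))).
    apply (dpl_ext (fun y => 1 * exp (- lam * y - 0)) _ t (- lam * (1 * exp (- lam * t - 0)))); [|reflexivity|apply dexpl].
    intro y. replace (- lam * y - 0) with (- lam * y) by ring. ring. }
  assert (Hqc : forall t, continuity_pt (fun y => p * exp (- lam1 * y - k lam1)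
                     + (1 - p) * exp (- lam2 * y - k lam2)) t).
  { intros t. apply derivable_continuous_pt.
    set (E1 := fun y => p * exp (- lam1 * y - k lam1)).
    set (E2 := fun y => (1 - p) * exp (- lam2 * y - k lam2)).
    exists (- lam1 * (p * exp (- lam1 * t - k lam1)) + - lam2 * ((1 - p) * exp (- lam2 * t - k lam2))).
    apply (dpl_ext (E1 + E2)%F _ t (- lam1 * (p * exp (- lam1 * t - k lam1)) + - lam2 * ((1 - p) * exp (- lam2 * t - k lam2)))); [reflexivity|reflexivity|].
    apply derivable_pt_lim_plus; apply dexpl. }
  assert (fc : forall t, above a t -> continuity_pt f t).
  { intros t Ht. apply (continuity_pt_mult _ s); auto. }
  assert (hc : forall lam t, above a t -> continuity_pt (fun x => exp (- lam * x) * s x) t).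
  { intros lam t Ht. apply (continuity_pt_mult _ s); auto. }
  assert (fpos : forall t, above a t -> 0 < f t).
  { intros t Ht. unfold f. apply Rmult_lt_0_compat; auto.
    pose proof (exp_pos (- lam1 * t - k lam1)). pose proof (exp_pos (- lam2 * t - k lam2)). nra. }
  set (c1 := p * exp (- k lam1)). set (c2 := (1 - p) * exp (- k lam2)).
  assert (fid : forall t, f t = c1 * (exp (- lam1 * t) * s t) + c2 * (exp (- lam2 * t) * s t)).
  { intro t. unfold f, c1, c2. unfold Rminus. rewrite !exp_plus. ring. }
  split.
  - intros x Hx.
    set (h1 := fun x => exp (- lam1 * x) * s x). set (h2 := fun x => exp (- lam2 * x) * s x).
    assert (h1p : forall t, above a t -> 0 <= h1 t)
      by (intros t Ht; unfold h1; pose proof (exp_pos (- lam1 * t)); pose proof (Hspos t Ht); nra).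
    assert (h2p : forall t, above a t -> 0 <= h2 t)
      by (intros t Ht; unfold h2; pose proof (exp_pos (- lam2 * t)); pose proof (Hspos t Ht); nra).
    pose proof (bound_Hk a h1 _ x (hc lam1) Hx h1p (Hk lam1 Hl1)) as B1.
    pose proof (bound_Hk a h2 _ x (hc lam2) Hx h2p (Hk lam2 Hl2)) as B2.
    set (Pf := Prim _ (clamp_cont a f x fc Hx) x).
    set (P1 := Prim _ (clamp_cont a h1 x (hc lam1) Hx) x).
    set (P2 := Prim _ (clamp_cont a h2 x (hc lam2) Hx) x).
    fold P1 in B1. fold P2 in B2.
    assert (Hc1 : 0 < c1) by (unfold c1; pose proof (exp_pos (- k lam1)); nra).
    assert (Hc2 : 0 < c2) by (unfold c2; pose proof (exp_pos (- k lam2)); nra).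
    apply (tail_exists a f x fc Hx (fun t Ht => Rlt_le _ _ (fpos t Ht))
             (c1 * (exp (k lam1) + 1) + c2 * (exp (k lam2) + 1))).
    intros V HV. fold Pf.
    set (DD := fun w => Pf w - c1 * P1 w - c2 * P2 w).
    assert (dDD : forall w, derivable_pt_lim DD w 0).
    { intro w. apply (dpl_ext (Pf - mult_real_fct c1 P1 - mult_real_fct c2 P2)%F _ w
        (f (Rmax x w) - c1 * h1 (Rmax x w) - c2 * h2 (Rmax x w))); [reflexivity| |].
      - rewrite fid. unfold h1, h2. ring.
      - apply derivable_pt_lim_minus; [apply derivable_pt_lim_minus|];
          [| apply derivable_pt_lim_scal | apply derivable_pt_lim_scal];
          exact (Prim_deriv _ _ x w). }
    assert (DD x <= DD V) by (apply (mono_up DD (fun _ => 0)); auto; intros; lra).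
    assert (DD V <= DD x) by (apply (mono_down DD (fun _ => 0)); auto; intros; lra).
    unfold DD in *. specialize (B1 V HV). specialize (B2 V HV).
    assert (c1 * (P1 V - P1 x) <= c1 * (exp (k lam1) + 1)) by (apply Rmult_le_compat_l; lra).
    assert (c2 * (P2 V - P2 x) <= c2 * (exp (k lam2) + 1)) by (apply Rmult_le_compat_l; lra).
    nra.
  - intros T HT x y Hx Hxy.
    assert (Hy : above a y) by (apply (above_mono a x); auto).
    set (P := Prim _ (clamp_cont a f x fc Hx) x).
    assert (Hfin : forall V, y <= V -> f x * (P V - P y) <= f y * (P V - P x)).
    { intros V HV.
      set (Pd := fun w => P (w + (x - y))).
      set (Phi := fun w => f y * (Pd w - P x) - f x * (P w - P y)).
      assert (Phi y <= Phi V).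
      { apply (mono_up Phi (fun w => f y * f (Rmax x (w + (x - y))) - f x * f (Rmax x w))); auto.
        - intros c Hc.
          apply (dpl_ext (mult_real_fct (f y) (Pd - fct_cte (P x)) -
                          mult_real_fct (f x) (P - fct_cte (P y)))%F _ c
                 (f y * (f (Rmax x (c + (x - y))) - 0) - f x * (f (Rmax x c) - 0)));
            [reflexivity|ring|].
          apply derivable_pt_lim_minus; apply derivable_pt_lim_scal;
            apply derivable_pt_lim_minus; try apply derivable_pt_lim_const.
          + apply dshift. exact (Prim_deriv _ _ x (c + (x - y))).
          + exact (Prim_deriv _ _ x c).
        - intros c Hc. rewrite !Rmax_right by lra.
          pose proof (LC x y (c + (x - y)) Hx Hxy ltac:(lra)) as L.
          replace (c + (x - y) + (y - x)) with c in L by ring. lra. }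
      unfold Phi, Pd in H. replace (y + (x - y)) with x in H by ring.
      assert (P (V + (x - y)) <= P V).
      { apply (Prim_mono a f x fc Hx); [intros; apply Rlt_le; auto|lra|lra]. }
      pose proof (fpos y Hy). pose proof (fpos x Hx).
      assert (f y * (P (V + (x - y)) - P x) <= f y * (P V - P x)) by (apply Rmult_le_compat_l; lra).
      lra. }
    assert (HTx := HT x Hx). assert (HTy := HT y Hy).
    assert (Tx : 0 < T x) by (apply (T_pos a f x x fc Hx); auto; lra).
    assert (Ty : 0 < T y) by (apply (T_pos a f x y fc Hx); auto).
    pose proof (fpos y Hy). pose proof (fpos x Hx).
    assert (Hmain : f x * T y <= f y * T x).
    { destruct (Rle_lt_dec (f x * T y) (f y * T x)) as [|Hlt]; auto. exfalso.
      set (eps := (f x * T y - f y * T x) / (2 * (f x + f y))).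
      assert (He : 0 < eps) by (unfold eps; apply Rdiv_lt_0_compat; lra).
      destruct (lim_T a f x x fc Hx (T x) ltac:(lra) HTx eps He) as [V1 H1].
      destruct (lim_T a f x y fc Hx (T y) Hxy HTy eps He) as [V2 H2].
      set (V := Rmax (Rmax V1 V2) y).
      assert (HV : V1 <= V /\ V2 <= V /\ y <= V).
      { pose proof (Rmax_l V1 V2); pose proof (Rmax_r V1 V2);
        pose proof (Rmax_l (Rmax V1 V2) y); pose proof (Rmax_r (Rmax V1 V2) y); unfold V; lra. }
      specialize (H1 V ltac:(lra)). specialize (H2 V ltac:(lra)). fold P in H1, H2.
      specialize (Hfin V ltac:(lra)).
      assert (E2 : eps * (2 * (f x + f y)) = f x * T y - f y * T x) by (unfold eps; field; lra).
      apply Rabs_def2 in H1. apply Rabs_def2 in H2.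
      assert (f x * (T y - eps) <= f x * (P V - P y)) by (apply Rmult_le_compat_l; lra).
      assert (f y * (P V - P x) <= f y * (T x + eps)) by (apply Rmult_le_compat_l; lra).
      nra. }
    replace (f x / T x) with ((f x * T y) * / (T x * T y)) by (field; lra).
    replace (f y / T y) with ((f y * T x) * / (T x * T y)) by (field; lra).
    apply Rmult_le_compat_r; auto. apply Rlt_le, Rinv_0_lt_compat, Rmult_lt_0_compat; auto.
Qed.
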